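(* Assume $f$ is in Case 4 and $(n_1,m_1)\neq(0,\delta)$. Then, for every sufficiently small $r>0$, $A_f^{l,+}=A_0\setminus E_z$ for every $0<l<\alpha$.
   Context: Let $f(z,w)=(p(z),q(z,w))$ be a holomorphic skew product defined on $\mathbb{C}^2$ or on $\{|z|<R\}\times\mathbb{C}$, where $R$ is so large that the attracting basin of $p$ at $0$ is relatively compact in $\{|z|<R\}$. Assume $p(z)=az^{\delta}+O(z^{\delta+1})$, $a\neq0$, $\delta\ge2$, and $q(z,w)=\sum_{i,j\ge0}b_{ij}z^iw^j$ with $b_{00}=b_{01}=0$. The Newton polygon $N(q)$ is the convex hull of $\bigcup_{b_{ij}\ne0}\{(x,y):x\ge i,\ y\ge j\}$, with vertices $(n_1,m_1),\dots,(n_s,m_s)$, $n_1<\dots<n_s$, $m_1>\dots>m_s$. For $1\le k\le s-1$, $T_k$ is the $y$-intercept of the line through $(n_k,m_k)$ and $(n_{k+1},m_{k+1})$. Case 4 means $s>2$ and $T_k\le\delta\le T_{k-1}$ for some $2\le k\le s-1$; set $(\gamma,d)=(n_k,m_k)$ and $\alpha=\gamma/(\delta-d)$. For $l>0$, $U^{l,+}=\{|z|<r,\ |w|<r|z|^l\}$ and $A_f^{l,+}=\bigcup_{n\ge0}f^{-n}(U^{l,+})$. $A_0$ is the attracting basin of the origin for $f$ and $E_z=\bigcup_{n\ge0}f^{-n}(\{z=0\})$. *)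

(* Defs.v *)
From HB Require Import structures.
From mathcomp Require Import all_boot all_order all_algebra.
From mathcomp Require Import all_classical all_reals all_analysis.
From mathcomp Require Import complex.
Set Implicit Arguments.
Unset Strict Implicit.
Unset Printing Implicit Defensive.
Import Order.TTheory GRing.Theory Num.Theory.
Import numFieldNormedType.Exports.
Local Open Scope ring_scope.
Local Open Scope classical_set_scope.

Definition cpx (R : realType) : numFieldType := R[i].

Section SkewProduct.
Variable R : realType.
Local Notation C := (cpx R).

Definition cabs (z : C) : R := ComplexField.Normc.normc (z : R[i]).

(* {|z| < Rad} ; Rad = None encodes Rad = +oo, i.e. the whole plane
   (the case where f is defined on C^2). *)
Definition disk (Rad : option R) : set C :=
  match Rad with
  | None => setT
  | Some R0 => [set z | cabs z < R0]
  end.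

(* holomorphy = complex (Frechet) differentiability *)
Definition holo1 (D : set C) (p : C -> C) :=
  forall z, D z -> differentiable p z.
Definition holo2 (D : set (C * C)) (q : C -> C -> C) :=
  forall x, D x -> differentiable (fun y : C * C => q y.1 y.2) x.

(* q(z,w) = sum_{i,j} b_ij z^i w^j near the origin (absolutely convergent
   on a small bidisk): the b_ij are the Taylor coefficients of q at 0. *)
Definition expansion2 (q : C -> C -> C) (b : nat -> nat -> C) :=
  exists2 eps : R, 0 < eps &
    (exists M : R, forall N : nat,
        \sum_(i < N) \sum_(j < N) cabs (b i j) * eps ^+ (i + j) <= M) /\
    (forall z w : C, cabs z < eps -> cabs w < eps ->
        (fun N : nat => \sum_(i < N) \sum_(j < N) b i j * z ^+ i * w ^+ j)
          @ \oo --> q z w).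

Definition basin1 (D : set C) (p : C -> C) : set C :=
  [set z | (forall n, D (iter n p z)) /\
           (fun n => iter n p z) @ \oo --> (0 : C)].

Definition rel_compact_in (B D : set C) :=
  compact (closure B) /\ closure B `<=` D.

Definition supp (b : nat -> nat -> C) : set (nat * nat) :=
  [set ij | b ij.1 ij.2 != 0].

Definition quadrants (b : nat -> nat -> C) : set (R * R) :=
  [set xy | exists ij, supp b ij /\ (ij.1)%:R <= xy.1 /\ (ij.2)%:R <= xy.2].

Definition conv_hull (A : set (R * R)) : set (R * R) :=
  [set x | exists (n : nat) (pt : 'I_n -> R * R) (lam : 'I_n -> R),
      (forall k, A (pt k)) /\ (forall k, 0 <= lam k) /\
      \sum_(k < n) lam k = 1 /\
      x = (\sum_(k < n) lam k * (pt k).1, \sum_(k < n) lam k * (pt k).2)].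

Definition newton_polygon (b : nat -> nat -> C) : set (R * R) :=
  conv_hull (quadrants b).

(* vertices = extreme points *)
Definition extreme_point (A : set (R * R)) (x : R * R) :=
  A x /\ forall (y z : R * R) (t : R), A y -> A z -> 0 < t < 1 ->
    x = (t * y.1 + (1 - t) * z.1, t * y.2 + (1 - t) * z.2) ->
    y = x /\ z = x.

Definition newton_vertices (b : nat -> nat -> C) (s : nat) (n m : nat -> nat) :=
  (forall v, extreme_point (newton_polygon b) v <->
     exists2 k : nat, (1 <= k <= s)%N & v = ((n k)%:R, (m k)%:R)) /\
  (forall k, (1 <= k)%N -> (k < s)%N -> (n k < n k.+1)%N /\ (m k.+1 < m k)%N).

(* y-intercept T_k of the line through (n_k,m_k) and (n_{k+1},m_{k+1}) *)
Definition T_intercept (n m : nat -> nat) (k : nat) : R :=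
  (m k)%:R + (n k)%:R * ((m k)%:R - (m k.+1)%:R) / ((n k.+1)%:R - (n k)%:R).

Definition skew_map (p : C -> C) (q : C -> C -> C) (x : C * C) : C * C :=
  (p x.1, q x.1 x.2).

Definition dom2 (Rad : option R) : set (C * C) := [set x | disk Rad x.1].

Definition preim_iter (Rad : option R) (f : C * C -> C * C) (n : nat)
    (S : set (C * C)) : set (C * C) :=
  [set x | (forall k, (k <= n)%N -> dom2 Rad (iter k f x)) /\ S (iter n f x)].

Definition basin0 (Rad : option R) (f : C * C -> C * C) : set (C * C) :=
  [set x | (forall k, dom2 Rad (iter k f x)) /\
           (fun k => iter k f x) @ \oo --> ((0 : C), (0 : C))].

Definition Ez (Rad : option R) (f : C * C -> C * C) : set (C * C) :=
  \bigcup_(n in [set: nat]) preim_iter Rad f n [set x | x.1 = 0].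

Definition Ulplus (r l : R) : set (C * C) :=
  [set x | cabs x.1 < r /\ cabs x.2 < r * (cabs x.1) `^ l].

Definition Alplus (Rad : option R) (f : C * C -> C * C) (r l : R) : set (C * C) :=
  \bigcup_(n in [set: nat]) preim_iter Rad f n (Ulplus r l).

End SkewProduct.

(* Main.v *)
Require Import Defs.
From HB Require Import structures.
From mathcomp Require Import all_boot all_order all_algebra.
From mathcomp Require Import all_classical all_reals all_analysis.
From mathcomp Require Import complex.
From mathcomp Require Import ring lra zify.
Import Order.TTheory GRing.Theory Num.Theory.
Import numFieldNormedType.Exports.
Local Open Scope ring_scope.
Local Open Scope classical_set_scope.

Lemma nat_wo {P : nat -> Prop} : (exists n, P n) ->
  exists m, P m /\ forall n, P n -> (m <= n)%N.
Proof.
move=> [n Pn].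
have ex : exists n, `[< P n >] by exists n; apply/asboolP.
have [m Pm mmin] := find_ex_minn ex.
exists m; split; first exact/asboolP.
by move=> k Pk; apply: mmin; apply/asboolP.
Qed.

Section MinEx.
Variable R : realType.

Lemma rows_min (t : R) (S : nat -> nat -> Prop) (J : nat) :
  (exists i j, S i j /\ (j < J)%N) ->
  exists i j, S i j /\ (j < J)%N /\
    forall i' j', S i' j' -> (j' < J)%N -> i%:R + t * j%:R <= i'%:R + t * j'%:R.
Proof.
elim: J => [|J IH]; first by move=> [i [j [_]]].
move=> Hex.
case: (pselect (exists i, S i J)) => [HJ|HJ].
  have [i1 [Si1 i1min]] := nat_wo HJ.
  have rowJ : forall i', S i' J -> i1%:R + t * J%:R <= i'%:R + t * J%:R :> R.
    by move=> i' Si'; rewrite lerD2r ler_nat; apply: i1min.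
  case: (pselect (exists i j, S i j /\ (j < J)%N)) => [Hlt|Hlt].
    have [i [j [Sij [jJ ijmin]]]] := IH Hlt.
    case: (leP (i%:R + t * j%:R : R) (i1%:R + t * J%:R)) => cmp.
      exists i, j; split => //; split; first by apply: ltnW.
      move=> i' j' Si' j'J; rewrite ltnS leq_eqVlt in j'J.
      case/orP: j'J => [/eqP Ej|j'J]; last exact: ijmin.
      by subst j'; apply: le_trans cmp _; apply: rowJ.
    exists i1, J; split => //; split => //.
    move=> i' j' Si' j'J; rewrite ltnS leq_eqVlt in j'J.
    case/orP: j'J => [/eqP Ej|j'J]; first by subst j'; apply: rowJ.
    by apply: le_trans (ltW cmp) _; apply: ijmin.
  exists i1, J; split => //; split => //.
  move=> i' j' Si' j'J; rewrite ltnS leq_eqVlt in j'J.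
  case/orP: j'J => [/eqP Ej|j'J]; first by subst j'; apply: rowJ.
  by exfalso; apply: Hlt; exists i', j'.
have Hex' : exists i j, S i j /\ (j < J)%N.
  move: Hex => [i [j [Sij]]]; rewrite ltnS leq_eqVlt => /orP [/eqP Ej|jJ].
    by exfalso; apply: HJ; exists i; rewrite -Ej.
  by exists i, j.
have [i [j [Sij [jJ ijmin]]]] := IH Hex'.
exists i, j; split => //; split; first by apply: ltnW.
move=> i' j' Si'; rewrite ltnS leq_eqVlt => /orP [/eqP Ej|j'J].
  by exfalso; apply: HJ; exists i'; rewrite -Ej.
exact: ijmin.
Qed.

Lemma min_exists (t : R) (S : nat -> nat -> Prop) (i0 j0 : nat) :
  0 < t -> S i0 j0 ->
  exists i j, S i j /\
    forall i' j', S i' j' -> i%:R + t * j%:R <= i'%:R + t * j'%:R.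
Proof.
move=> t0 S0.
set x : R := (i0%:R + t * j0%:R) / t + j0%:R.
have x0 : 0 <= x by rewrite /x addr_ge0 // divr_ge0 // ?addr_ge0 ?mulr_ge0 // ltW.
have xJ := archi_boundP x0.
set J := Num.Def.archi_bound x in xJ.
have j0J : (j0 < J)%N.
  rewrite -(ltr_nat R); apply: le_lt_trans xJ.
  by rewrite /x lerDr divr_ge0 // ?addr_ge0 ?mulr_ge0 // ltW.
have [i [j [Sij [jJ ijmin]]]] := @rows_min t S J (ex_intro _ i0 (ex_intro _ j0 (conj S0 j0J))).
exists i, j; split => // i' j' Si'.
case: (ltnP j' J) => j'J; first exact: ijmin.
apply: le_trans (ijmin _ _ S0 j0J) _.
have h1 : i0%:R + t * j0%:R <= t * x.
  rewrite /x mulrDr mulrCA mulfV ?gt_eqF // mulr1 lerDl mulr_ge0 // ltW //.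
apply: le_trans h1 _.
apply: le_trans (_ : t * J%:R <= _).
  by rewrite ler_pM2l // ltW.
apply: le_trans (_ : t * j'%:R <= _); first by rewrite ler_pM2l // ler_nat.
by rewrite lerDr.
Qed.
End MinEx.

Set Implicit Arguments.
Unset Strict Implicit.

Section NP.
Variable R : realType.
Variable b : nat -> nat -> cpx R.
Local Notation N := (newton_polygon b).

Lemma N_supp i j : b i j != 0 -> N (i%:R, j%:R).
Proof.
move=> bij; exists 1%N, (fun _ => (i%:R, j%:R)), (fun _ => 1).
split; first by move=> _; exists (i, j).
split; first by move=> _; apply: ler01.
by rewrite !big_ord1 !mul1r.
Qed.

Lemma N_up x h : N x -> 0 <= h -> N (x.1, x.2 + h).
Proof.
move=> [n [pt [lam [Hq [Hl [Hs ->]]]]]] h0.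
exists n, (fun k => ((pt k).1, (pt k).2 + h)), lam.
split.
  move=> k; have [ij [Sij [H1 H2]]] := Hq k; exists ij; split => //; split => //=.
  by apply: le_trans H2 _; rewrite lerDl.
split => //; split => //=; congr (_, _); rewrite /=.
have -> : \sum_(k < n) lam k * ((pt k).2 + h) =
  \sum_(k < n) lam k * (pt k).2 + \sum_(k < n) lam k * h.
  by rewrite -big_split; apply: eq_bigr => k _; rewrite mulrDr.
by rewrite -mulr_suml Hs mul1r.
Qed.

Lemma N_conv x y t : N x -> N y -> 0 <= t <= 1 ->
  N (t * x.1 + (1 - t) * y.1, t * x.2 + (1 - t) * y.2).
Proof.
move=> [n1 [pt1 [lam1 [Hq1 [Hl1 [Hs1 ->]]]]]] [n2 [pt2 [lam2 [Hq2 [Hl2 [Hs2 ->]]]]]].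
move=> /andP [t0 t1].
exists (n1 + n2)%N.
exists (fun k => match fintype.split k with inl a => pt1 a | inr c => pt2 c end).
exists (fun k => match fintype.split k with inl a => t * lam1 a | inr c => (1 - t) * lam2 c end).
split; first by move=> k; case: (fintype.split k).
split; first by move=> k; case: (fintype.split k) => c;
  apply: mulr_ge0 => //; rewrite subr_ge0.
have sl : forall i : 'I_n1, fintype.split (lshift n2 i) = inl i.
  by move=> i; apply: (@unsplitK n1 n2 (inl i)).
have sr : forall i : 'I_n2, fintype.split (rshift n1 i) = inr i.
  by move=> i; apply: (@unsplitK n1 n2 (inr i)).
split.
  rewrite big_split_ord /=.
  under eq_bigr do rewrite sl.
  under [X in _ + X]eq_bigr do rewrite sr.
  by rewrite -!mulr_sumr Hs1 Hs2 !mulr1 addrC subrK.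
congr (_, _); rewrite big_split_ord /=;
  by congr (_ + _); rewrite mulr_sumr; apply: eq_bigr => i _; rewrite ?sl ?sr /= mulrA.
Qed.

Lemma N_notext x h : N x -> 0 < h -> ~ extreme_point N (x.1, x.2 + h).
Proof.
move=> Nx h0 [_ Hext].
have N1 := N_up Nx (ltW h0).
have N2 : N (x.1, x.2 + 2 * h) by apply: N_up => //; rewrite mulr_ge0 // ltW.
have Nx' : N (x.1, x.2) by case: x Nx {N1 N2 Hext}.
have H12 : 0 < (1 / 2 : R) < 1 by rewrite divr_gt0 //=; lra.
have Heq : (x.1, x.2 + h) = (1 / 2 * (x.1, x.2).1 + (1 - 1 / 2) * (x.1, x.2 + 2 * h).1,
   1 / 2 * (x.1, x.2).2 + (1 - 1 / 2) * (x.1, x.2 + 2 * h).2).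
  by rewrite /=; congr (_, _); field.
have [Ey _] := Hext _ _ _ Nx' N2 H12 Heq.
case: Ey => /eqP; rewrite eq_sym -subr_eq0 addrC addKr gt_eqF //.
Qed.

Lemma N_elim x : N x -> exists n (pt : 'I_n -> R * R) (lam : 'I_n -> R),
  (forall k, exists ij, b ij.1 ij.2 != 0 /\ (ij.1)%:R <= (pt k).1 /\ (ij.2)%:R <= (pt k).2)
  /\ (forall k, 0 <= lam k) /\ \sum_(k < n) lam k = 1 /\
  x.1 = \sum_(k < n) lam k * (pt k).1 /\ x.2 = \sum_(k < n) lam k * (pt k).2.
Proof.
move=> [n [pt [lam [Hq [Hl [Hs ->]]]]]].
by exists n, pt, lam; split => //.
Qed.

Lemma N_phi_sum n (pt : 'I_n -> R * R) (lam : 'I_n -> R) t :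
  \sum_(k < n) lam k * (pt k).1 + t * \sum_(k < n) lam k * (pt k).2 =
  \sum_(k < n) lam k * ((pt k).1 + t * (pt k).2).
Proof.
rewrite mulr_sumr -big_split /=; apply: eq_bigr => k _; ring.
Qed.

Lemma N_lower (t mu : R) : 0 < t ->
  (forall i j, b i j != 0 -> mu <= i%:R + t * j%:R) ->
  forall x, N x -> mu <= x.1 + t * x.2.
Proof.
move=> t0 Hmu x /N_elim [n [pt [lam [Hq [Hl [Hs [-> ->]]]]]]].
rewrite N_phi_sum.
have -> : mu = \sum_(k < n) lam k * mu by rewrite -mulr_suml Hs mul1r.
apply: ler_sum => k _; apply: ler_wpM2l => //.
have [[i j] [bij [H1 H2]]] := Hq k.
apply: le_trans (Hmu _ _ bij) _.
by apply: lerD => //; apply: ler_wpM2l => //; apply: ltW.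
Qed.

Lemma N_left (t mu : R) (ia : nat) : 0 < t ->
  (forall i j, b i j != 0 -> mu <= i%:R + t * j%:R) ->
  (forall i j, b i j != 0 -> i%:R + t * j%:R = mu -> (ia <= i)%N) ->
  forall x, N x -> x.1 + t * x.2 = mu -> ia%:R <= x.1.
Proof.
move=> t0 Hmu Hleft x /N_elim [n [pt [lam [Hq [Hl [Hs [E1 E2]]]]]]] Ex.
have Hz : \sum_(k < n) lam k * ((pt k).1 + t * (pt k).2 - mu) = 0.
  have -> : \sum_(k < n) lam k * ((pt k).1 + t * (pt k).2 - mu) =
    \sum_(k < n) lam k * ((pt k).1 + t * (pt k).2) - \sum_(k < n) lam k * mu.
    by rewrite -sumrB; apply: eq_bigr => k _; ring.
  by rewrite -N_phi_sum -E1 -E2 Ex -mulr_suml Hs mul1r subrr.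
have Hge : forall k, mu <= (pt k).1 + t * (pt k).2.
  move=> k; have [[i j] [bij [H1 H2]]] := Hq k.
  apply: le_trans (Hmu _ _ bij) _.
  by apply: lerD => //; apply: ler_wpM2l => //; apply: ltW.
have H0 : forall k0 : 'I_n, true -> 0 <= lam k0 * ((pt k0).1 + t * (pt k0).2 - mu).
  by move=> k0 _; apply: mulr_ge0 => //; rewrite subr_ge0.
have Hz' := psumr_eq0P H0 Hz.
have Hterm : forall k, 0 <= lam k * ((pt k).1 - ia%:R).
  move=> k; have := Hz' k isT.
  move=> /eqP; rewrite mulf_eq0 => /orP [/eqP ->|]; first by rewrite mul0r.
  rewrite subr_eq0 => /eqP Ek.
  have [[i j] [bij [H1 H2]]] := Hq k.
  have Hm := Hmu _ _ bij.
  have Hi : (pt k).1 = i%:R /\ (pt k).2 = j%:R.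
    have h2 : t * j%:R <= t * (pt k).2 by apply: ler_wpM2l => //; apply: ltW.
    have e1 : (pt k).1 = i%:R by lra.
    split => //.
    have : t * (pt k).2 = t * j%:R by lra.
    by move/mulfI; apply; rewrite gt_eqF.
  apply: mulr_ge0 => //; rewrite subr_ge0 Hi.1 ler_nat; apply: (Hleft _ _ bij).
  by rewrite -Hi.1 -Hi.2.
rewrite E1 -subr_ge0.
have -> : \sum_(k < n) lam k * (pt k).1 - ia%:R = \sum_(k < n) lam k * ((pt k).1 - ia%:R).
  rewrite -[X in _ - X]mul1r -Hs mulr_suml -sumrB; apply: eq_bigr => k _; ring.
by apply: sumr_ge0 => k _.
Qed.

Lemma ext_min (t : R) (ia ja : nat) : 0 < t -> b ia ja != 0 ->
  (forall i j, b i j != 0 -> ia%:R + t * ja%:R <= i%:R + t * j%:R) ->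
  (forall i j, b i j != 0 -> i%:R + t * j%:R = ia%:R + t * ja%:R -> (ia <= i)%N) ->
  extreme_point N (ia%:R, ja%:R).
Proof.
move=> t0 bs Hmin Hleft.
split; first exact: N_supp.
move=> y z s Ny Nz /andP [s0 s1] Ex.
have Ly := N_lower t0 Hmin Ny.
have Lz := N_lower t0 Hmin Nz.
have [E1 E2] : ia%:R = s * y.1 + (1 - s) * z.1 /\ ja%:R = s * y.2 + (1 - s) * z.2.
  by case: Ex.
have Py : y.1 + t * y.2 = ia%:R + t * ja%:R by nra.
have Pz : z.1 + t * z.2 = ia%:R + t * ja%:R by nra.
have Iy := N_left t0 Hmin Hleft Ny Py.
have Iz := N_left t0 Hmin Hleft Nz Pz.
have y1 : y.1 = ia%:R by nra.
have z1 : z.1 = ia%:R by nra.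
have y2 : y.2 = ja%:R.
  have : t * y.2 = t * ja%:R by lra.
  by move/mulfI; apply; rewrite gt_eqF.
have z2 : z.2 = ja%:R.
  have : t * z.2 = t * ja%:R by lra.
  by move/mulfI; apply; rewrite gt_eqF.
by case: y z {Ny Nz Ly Lz E1 E2 Py Pz Iy Iz Ex} y1 z1 y2 z2 => [? ?] [? ?] /= -> -> -> ->.
Qed.

End NP.

Set Implicit Arguments.
Unset Strict Implicit.

Ltac nlia := repeat match goal with
  | H : ?T |- _ => lazymatch T with
      | context [Order.le] => clear H
      | context [Order.lt] => clear H
      | context [GRing.add] => clear H
      | context [GRing.mul] => clear H
      | context [GRing.natmul] => clear H
      | context [newton_vertices] => clear H
      end
  end; lia.

Section Comb.
Variable R : realType.
Variable b : nat -> nat -> cpx R.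
Variables (s : nat) (n m : nat -> nat).
Hypothesis NV : newton_vertices b s n m.
Local Notation N := (newton_polygon b).

Lemma vert_mono a c : (1 <= a)%N -> (a < c)%N -> (c <= s)%N ->
  (n a < n c)%N /\ (m c < m a)%N.
Proof.
move=> a1; elim: c => [//|c IH] ac cs.
have [_ Hch] := NV.
rewrite ltnS leq_eqVlt in ac; case/orP: ac => [/eqP Eac|ac].
  by subst c; apply: Hch.
have [h1 h2] := IH ac (ltnW cs).
have [h3 h4] := Hch c (leq_trans a1 (ltnW ac)) cs.
by split; [apply: ltn_trans h1 h3 | apply: ltn_trans h4 h2].
Qed.

Lemma vert_ext a : (1 <= a <= s)%N -> extreme_point N ((n a)%:R, (m a)%:R).
Proof. by move=> Ha; apply/(NV.1 _); exists a. Qed.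

Lemma vert_N a : (1 <= a <= s)%N -> N ((n a)%:R, (m a)%:R).
Proof. by move=> /vert_ext []. Qed.

Lemma segment a c e : (1 <= a)%N -> (a < c)%N -> (c < e)%N -> (e <= s)%N ->
  ((n e)%:R - (n a)%:R) * (m c)%:R <=
  ((n e)%:R - (n c)%:R) * (m a)%:R + ((n c)%:R - (n a)%:R) * (m e)%:R :> R.
Proof.
move=> a1 ac ce es.
have cs : (c <= s)%N by lia.
have c1 : (1 <= c)%N by lia.
have as_ : (1 <= a <= s)%N by lia.
have es_ : (1 <= e <= s)%N by lia.
have cs_ : (1 <= c <= s)%N by lia.
have [nac _] := vert_mono a1 ac cs.
have [nce _] := vert_mono c1 ce es.
have nac' : (n a)%:R < (n c)%:R :> R by rewrite ltr_nat.
have nce' : (n c)%:R < (n e)%:R :> R by rewrite ltr_nat.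
set na := (n a)%:R : R in nac' *; set nc := (n c)%:R : R in nac' nce' *.
set ne := (n e)%:R : R in nce' *.
set ma := (m a)%:R : R; set mc := (m c)%:R : R; set me := (m e)%:R : R.
set t := (ne - nc) / (ne - na).
have dpos : 0 < ne - na by lra.
have t01 : 0 <= t <= 1.
  apply/andP; split; first by rewrite divr_ge0 //; lra.
  by rewrite ler_pdivrMr // mul1r; lra.
have NQ := N_conv (vert_N as_) (vert_N es_) t01.
have Q1 : t * na + (1 - t) * ne = nc.
  rewrite /t; field; lra.
case: (leP mc (t * ma + (1 - t) * me)) => H.
  have : (ne - na) * mc <= (ne - na) * (t * ma + (1 - t) * me) by rewrite ler_pM2l.
  have -> : (ne - na) * (t * ma + (1 - t) * me) = (ne - nc) * ma + (nc - na) * me.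
    rewrite /t; field; lra.
  by [].
exfalso.
have Hext := vert_ext cs_.
have := N_notext NQ (h := mc - (t * ma + (1 - t) * me)) _.
rewrite /= Q1 [X in (_, X)](_ : _ = mc); last by rewrite /ma /me; ring.
apply => //; by rewrite subr_gt0.
Qed.


Lemma seg_phi (al : R) a c e : 0 <= al -> (1 <= a)%N -> (a < c)%N -> (c < e)%N -> (e <= s)%N ->
  ((n e)%:R - (n a)%:R) * ((n c)%:R + al * (m c)%:R) <=
  ((n e)%:R - (n c)%:R) * ((n a)%:R + al * (m a)%:R) +
  ((n c)%:R - (n a)%:R) * ((n e)%:R + al * (m e)%:R) :> R.
Proof.
move=> al0 a1 ac ce es.
have H := segment a1 ac ce es.
have H' := ler_wpM2l al0 H.
set na := (n a)%:R : R in H H' *; set nc := (n c)%:R : R in H H' *.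
set ne := (n e)%:R : R in H H' *.
set ma := (m a)%:R : R in H H' *; set mc := (m c)%:R : R in H H' *.
set me := (m e)%:R : R in H H' *.
have E : (ne - na) * (nc + al * mc) = (ne - nc) * na + (nc - na) * ne + al * ((ne - na) * mc).
  by ring.
rewrite E.
have E2 : (ne - nc) * (na + al * ma) + (nc - na) * (ne + al * me) =
   (ne - nc) * na + (nc - na) * ne + al * ((ne - nc) * ma + (nc - na) * me) by ring.
rewrite E2; lra.
Qed.

Section Case4.
Variables (k delta : nat).
Hypotheses (s2 : (2 < s)%N) (k2 : (2 <= k)%N) (ks : (k <= s.-1)%N).
Hypothesis HT : T_intercept R n m k <= delta%:R <= T_intercept R n m k.-1.
Hypothesis Hv1 : (n 1%N, m 1%N) != (0%N, delta).

Local Notation ga := ((n k)%:R : R).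
Local Notation dd := ((m k)%:R : R).
Local Notation de := (delta%:R : R).
Local Notation al := (ga / (de - dd)).

Lemma c4_basic :
  [/\ 0 < ga, 0 < de - dd, 0 < al & al * (de - dd) = ga] /\
      (al * de <= (n k.+1)%:R + al * (m k.+1)%:R /\
      al * de <= (n k.-1)%:R + al * (m k.-1)%:R).
Proof.
have k1 : (1 <= k)%N by nlia.
have kS : (k < s)%N by nlia.
have [nk1 mk1] := (NV.2 k k1 kS).
have km : (1 <= k.-1)%N by nlia.
have kmS : (k.-1 < s)%N by nlia.
have [nk0 mk0] := (NV.2 k.-1 km kmS).
rewrite prednK in nk0 mk0; last by nlia.
have [n1k _] := vert_mono (a := 1) (c := k) (leqnn 1) k2 (ltnW kS).
have gpos : 0 < ga by rewrite ltr0n; nlia.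
move: HT => /andP [HT1 HT2].
rewrite /T_intercept in HT1 HT2.
rewrite prednK in HT2; last by nlia.
set n1 := ((n k.+1)%:R : R) in HT1 *; set m1 := ((m k.+1)%:R : R) in HT1 *.
set n0 := ((n k.-1)%:R : R) in HT2 *; set m0 := ((m k.-1)%:R : R) in HT2 *.
have hn1 : ga < n1 by rewrite ltr_nat.
have hm1 : m1 < dd by rewrite ltr_nat.
have hn0 : n0 < ga by rewrite ltr_nat.
have hm0 : dd < m0 by rewrite ltr_nat.
set X := ga * (dd - m1) / (n1 - ga) in HT1.
have EX : X * (n1 - ga) = ga * (dd - m1) by rewrite /X; field; lra.
have Xpos : 0 < X by rewrite /X divr_gt0 ?mulr_gt0 //; lra.
have ddpos : 0 < de - dd by lra.
have alpos : 0 < al by rewrite divr_gt0.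
have alE : al * (de - dd) = ga by field; lra.
split => //; split.
- have h1 : ga * (dd - m1) <= (de - dd) * (n1 - ga).
    rewrite -EX; apply: ler_wpM2r; lra.
  have h2 : (n1 - ga) * (de - dd) - ga * (dd - m1) >= 0 by lra.
  have h3 : (n1 + al * m1 - al * de) * (de - dd) = (n1 - ga) * (de - dd) - ga * (dd - m1).
    rewrite /=; field; lra.
  have h4 : 0 <= (n1 + al * m1 - al * de) * (de - dd) by rewrite h3; lra.
  rewrite -subr_ge0; move: h4; rewrite pmulr_lge0 //.
- set Y := n0 * (m0 - dd) / (ga - n0) in HT2.
  have EY : Y * (ga - n0) = n0 * (m0 - dd) by rewrite /Y; field; lra.
  have h1 : (m0 - de + Y) * (ga - n0) >= 0 by apply: mulr_ge0; lra.
  have h3 : (n0 + al * m0 - al * de) * (de - dd) = (m0 - de + Y) * (ga - n0).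
    have -> : (m0 - de + Y) * (ga - n0) = (m0 - de) * (ga - n0) + Y * (ga - n0) by ring.
    rewrite EY /=; field; lra.
  have h4 : 0 <= (n0 + al * m0 - al * de) * (de - dd) by rewrite h3.
  rewrite -subr_ge0; move: h4; rewrite pmulr_lge0 //.
Qed.


Lemma ext_vertex (t : R) (ia ja : nat) : 0 < t -> b ia ja != 0 ->
  (forall i j, b i j != 0 -> ia%:R + t * ja%:R <= i%:R + t * j%:R) ->
  (forall i j, b i j != 0 -> i%:R + t * j%:R = ia%:R + t * ja%:R -> (ia <= i)%N) ->
  exists2 a, (1 <= a <= s)%N & ia = n a /\ ja = m a.
Proof.
move=> t0 bs Hmin Hleft.
have [a Ha E] := (NV.1 _).1 (ext_min t0 bs Hmin Hleft).
exists a => //; case: E => /eqP E1 /eqP E2.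
by rewrite eqr_nat in E1; rewrite eqr_nat in E2; split; apply/eqP.
Qed.

Lemma leftmost_min (t : R) (i0 j0 : nat) : 0 < t -> b i0 j0 != 0 ->
  exists ia ja, b ia ja != 0 /\
   (forall i j, b i j != 0 -> ia%:R + t * ja%:R <= i%:R + t * j%:R) /\
   (forall i j, b i j != 0 -> i%:R + t * j%:R = ia%:R + t * ja%:R -> (ia <= i)%N) /\
   (forall i j, b i j != 0 -> i%:R + t * j%:R = ia%:R + t * ja%:R -> (ia <= i)%N).
Proof.
move=> t0 b0.
have [i1 [j1 [b1 H1]]] := @min_exists R t (fun i j => b i j != 0) i0 j0 t0 b0.
set mu := i1%:R + t * j1%:R in H1.
have [ia [[ja [bja Eja]] Hia]] := nat_wo (P := fun i => exists j, b i j != 0 /\ i%:R + t * j%:R = mu)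
   (ex_intro _ i1 (ex_intro _ j1 (conj b1 erefl))).
exists ia, ja; split => //.
have Hl : forall i j, b i j != 0 -> i%:R + t * j%:R = ia%:R + t * ja%:R -> (ia <= i)%N.
  by move=> i j bij E; apply: Hia; exists j; split => //; rewrite E.
split; last by split.
by move=> i j bij; rewrite Eja; apply: H1.
Qed.

Lemma c4_pointwise i j : b i j != 0 -> al * de <= i%:R + al * j%:R.
Proof.
have [[gpos ddpos alpos alE] [Hk1 Hk0]] := c4_basic.
move=> bij; case: (leP (al * de) (i%:R + al * j%:R)) => // Hlt; exfalso.
have [ia [ja [bja [Hmin [Hleft _]]]]] := leftmost_min alpos bij.
have [a Ha [Ea1 Ea2]] := ext_vertex alpos bja Hmin Hleft.
have Hva : (n a)%:R + al * (m a)%:R < al * de.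
  by rewrite -Ea1 -Ea2; apply: le_lt_trans (Hmin _ _ bij) Hlt.
have kS : (k < s)%N by nlia.
case: (ltngtP a k) => [ak|ka|Eak].
- have [Eak1|ak1] : a = k.-1 \/ (a < k.-1)%N by nlia.
    by rewrite Eak1 in Hva; lra.
  have a1 : (1 <= a)%N by nlia.
  have k0k : (k.-1 < k)%N by nlia.
  have k0s : (k.-1 <= s)%N by nlia.
  have k01 : (1 <= k.-1)%N by nlia.
  have H := seg_phi (ltW alpos) a1 ak1 k0k (ltnW kS).
  have [nak _] := vert_mono a1 ak1 k0s.
  have [nk0 _] := vert_mono k01 k0k (ltnW kS).
  move: nak nk0; rewrite -!(ltr_nat R) => nak nk0.
  set na := (n a)%:R : R in H nak Hva *; set n0 := (n k.-1)%:R : R in H nak nk0 Hk0 *.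
  set fa := na + al * (m a)%:R in H Hva *; set f0 := n0 + al * (m k.-1)%:R in H Hk0 *.
  have p1 : 0 <= (ga - na) * (f0 - al * de) by apply: mulr_ge0; lra.
  have p2 : 0 < (ga - n0) * (al * de - fa) by apply: mulr_gt0; lra.
  have E : ga + al * dd = al * de.
    by lra.
  rewrite E in H; lra.
- have [Eak1|ak1] : a = k.+1 \/ (k.+1 < a)%N by nlia.
    by rewrite Eak1 in Hva; lra.
  have k1 : (1 <= k)%N by nlia.
  have as_ : (a <= s)%N by nlia.
  have k1s : (k.+1 <= s)%N by nlia.
  have k11 : (1 <= k.+1)%N by nlia.
  have H := seg_phi (ltW alpos) k1 (ltnSn k) ak1 as_.
  have [nk1 _] := vert_mono k1 (ltnSn k) k1s.
  have [n1a _] := vert_mono k11 ak1 as_.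
  move: nk1 n1a; rewrite -!(ltr_nat R) => nk1 n1a.
  set na := (n a)%:R : R in H n1a Hva *; set n1 := (n k.+1)%:R : R in H nk1 n1a Hk1 *.
  set fa := na + al * (m a)%:R in H Hva *; set f1 := n1 + al * (m k.+1)%:R in H Hk1 *.
  have p1 : 0 <= (na - ga) * (f1 - al * de) by apply: mulr_ge0; lra.
  have p2 : 0 < (n1 - ga) * (al * de - fa) by apply: mulr_gt0; lra.
  have E : ga + al * dd = al * de.
    by lra.
  rewrite E in H; lra.
- rewrite Eak in Hva.
  have E : ga + al * dd = al * de by lra.
  lra.
Qed.

Lemma c4_no0d : b 0%N delta == 0.
Proof.
have [[gpos ddpos alpos alE] _] := c4_basic.
apply/negPn/negP => b0.
have [ia [ja [bja [Hmin [Hleft _]]]]] := leftmost_min alpos b0.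
have ia0 : ia = 0%N.
  apply/eqP; rewrite -leqn0; apply: (Hleft 0%N delta b0).
  apply: le_anti; apply/andP; split; last exact: Hmin _ _ b0.
  by rewrite add0r; exact: c4_pointwise bja.
have jad : ja = delta.
  have h1 := Hmin _ _ b0; have h2 := c4_pointwise bja.
  rewrite ia0 !add0r in h1 h2.
  have : al * ja%:R = al * de by lra.
  by move/mulfI => /(_ (lt0r_neq0 alpos)) /eqP; rewrite eqr_nat => /eqP.
have [a Ha [Ea1 Ea2]] := ext_vertex alpos bja Hmin Hleft.
have a1 : a = 1%N.
  move/andP: (Ha) => [a1' as'].
  apply/eqP; rewrite eqn_leq a1' andbT.
  rewrite leqNgt; apply/negP => a2.
  have [n1a _] := vert_mono (a := 1) (c := a) (leqnn 1) a2 as'.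
  by move: n1a; rewrite -Ea1 ia0.
by move: Hv1; rewrite -a1 -Ea1 -Ea2 ia0 jad eqxx.
Qed.

Lemma c4_margin (l : R) : 0 < l < al ->
  exists2 mu, l * de < mu & forall i j, b i j != 0 -> mu <= i%:R + l * j%:R.
Proof.
have [[gpos ddpos alpos alE] _] := c4_basic.
move=> /andP [l0 la].
have strict : forall i j, b i j != 0 -> l * de < i%:R + l * j%:R.
  move=> i j bij.
  have H := c4_pointwise bij.
  case: (ltngtP j delta) => [jd|dj|Ejd].
  - have jd' : j%:R < de by rewrite ltr_nat.
    have p : 0 < (al - l) * (de - j%:R) by apply: mulr_gt0; lra.
    lra.
  - have dj' : de < j%:R by rewrite ltr_nat.
    have p : 0 < l * (j%:R - de) by apply: mulr_gt0; lra.
    have : 0 <= i%:R :> R by [].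
    lra.
  - subst j; case: i bij H => [|i] bij H; first by move: c4_no0d; rewrite (negbTE bij).
    have : 0 < (i.+1)%:R :> R by rewrite ltr0n.
    lra.
have [i0 [j0 b0]] : exists i j, b i j != 0.
  have := vert_N (a := 1) _; rewrite (_ : (1 <= 1 <= s)%N); last by nlia.
  move=> /(_ isT) /N_elim [nn [pt [lam [Hq [Hl [Hs _]]]]]].
  case: nn pt lam Hq Hl Hs => [|nn] pt lam Hq Hl Hs.
    by move: Hs; rewrite big_ord0 => /eqP; rewrite eq_sym oner_eq0.
  have [[i j] [bij _]] := Hq ord0.
  by exists i, j.
have [i1 [j1 [b1 H1]]] := @min_exists R l (fun i j => b i j != 0) i0 j0 l0 b0.
exists (i1%:R + l * j1%:R); first exact: strict.
exact: H1.
Qed.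

End Case4.
End Comb.

Local Open Scope complex_scope.
Set Implicit Arguments.
Unset Strict Implicit.

Section CB.
Variable R : realType.
Local Notation C := (cpx R).

Lemma normE (z : C) : `|z| = (cabs z)%:C.
Proof. reflexivity. Qed.

Lemma cabs_ge0 (z : C) : 0 <= cabs z.
Proof. by rewrite /cabs /ComplexField.Normc.normc; case: z => x y; apply: sqrtr_ge0. Qed.

Lemma cabsM (x y : C) : cabs (x * y) = cabs x * cabs y.
Proof. exact: ComplexField.Normc.normcM. Qed.

Lemma cabs0 : cabs (0 : C) = 0.
Proof. exact: ComplexField.Normc.normc0. Qed.

Lemma cabs1 : cabs (1 : C) = 1.
Proof. exact: ComplexField.Normc.normc1. Qed.

Lemma cabs_eq0 (z : C) : cabs z = 0 -> z = 0.
Proof. exact: ComplexField.Normc.eq0_normc. Qed.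

Lemma cabs_gt0 (z : C) : z != 0 -> 0 < cabs z.
Proof.
move=> z0; rewrite lt_def cabs_ge0 andbT; apply/negP => /eqP /cabs_eq0 E.
by rewrite E eqxx in z0.
Qed.

Lemma cabsX (z : C) n : cabs (z ^+ n) = cabs z ^+ n.
Proof. by elim: n => [|n IH]; rewrite ?expr0 ?cabs1 // !exprS cabsM IH. Qed.

Lemma cabsD (x y : C) : cabs (x + y) <= cabs x + cabs y.
Proof. exact: le_normcD. Qed.

Lemma cabsN (x : C) : cabs (- x) = cabs x.
Proof. exact: normcN. Qed.

Lemma cabsB (x y : C) : cabs (x - y) <= cabs x + cabs y.
Proof. by apply: le_trans (cabsD _ _) _; rewrite cabsN. Qed.

Lemma cabs_sum n (F : 'I_n -> C) : cabs (\sum_(i < n) F i) <= \sum_(i < n) cabs (F i).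
Proof.
elim: n F => [|n IH] F; first by rewrite !big_ord0 cabs0.
rewrite !big_ord_recr /=; apply: le_trans (cabsD _ _) _.
by rewrite lerD2r; apply: IH.
Qed.

Lemma ltC (x : C) (e : R) : (`|x| < e%:C) = (cabs x < e).
Proof. by rewrite normE ltcR. Qed.

Lemma cvgC (S : nat -> C) L : S @ \oo --> L ->
  forall e : R, 0 < e -> exists N, forall k, (N <= k)%N -> cabs (L - S k) < e.
Proof.
move=> /cvgrPdist_lt H e e0.
have e0' : (0 : C) < e%:C by rewrite ltcR.
have [N _ HN] := H _ e0'.
by exists N => k Nk; rewrite -ltC; apply: HN.
Qed.

Lemma cvgC0 (S : nat -> C) :
  (forall e : R, 0 < e -> exists N, forall k, (N <= k)%N -> cabs (S k) < e) ->
  S @ \oo --> 0.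
Proof.
move=> H; apply/cvgrPdist_lt => e e0.
move: (e0); rewrite ltcE => /andP [/eqP Ie Re0].
have [N HN] := H _ Re0.
exists N => // k Nk /=.
have -> : e = (complex.Re e)%:C by case: e {e0} Ie Re0 {HN} => x y /= ->.
by rewrite ltC sub0r cabsN; apply: HN.
Qed.

Lemma cvg_fst_seq (u : nat -> C * C) (l : C * C) :
  u @ \oo --> l -> (fun k => (u k).1) @ \oo --> l.1.
Proof. by move=> H; apply: cvg_comp H _; apply: cvg_fst. Qed.

Lemma cvg_snd_seq (u : nat -> C * C) (l : C * C) :
  u @ \oo --> l -> (fun k => (u k).2) @ \oo --> l.2.
Proof. by move=> H; apply: cvg_comp H _; apply: cvg_snd. Qed.

Lemma cvg_pair_seq (u : nat -> C * C) (l : C * C) :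
  (fun k => (u k).1) @ \oo --> l.1 -> (fun k => (u k).2) @ \oo --> l.2 ->
  u @ \oo --> l.
Proof.
move=> H1 H2; have := cvg_pair H1 H2.
have -> : (fun k => ((u k).1, (u k).2)) = u by apply: funext => k; case: (u k).
move=> H; exact: H.
Qed.

End CB.

Local Open Scope complex_scope.
Set Implicit Arguments.
Unset Strict Implicit.

Section QB.
Variable R : realType.
Local Notation C := (cpx R).

Lemma posC (e : C) : 0 < e -> 0 < complex.Re e /\ e = (complex.Re e)%:C.
Proof.
rewrite ltcE => /andP [/eqP Ie Re0]; split => //.
by case: e Ie Re0 => x y /= ->.
Qed.

Lemma Qbound (q : C -> C -> C) (b : nat -> nat -> C) (eps M : R) (z w : C) (G : R) :
  0 < eps ->
  (forall N, \sum_(i < N) \sum_(j < N) cabs (b i j) * eps ^+ (i + j) <= M) ->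
  (fun N => \sum_(i < N) \sum_(j < N) b i j * z ^+ i * w ^+ j) @ \oo --> q z w ->
  0 <= G ->
  (forall i j, b i j != 0 -> (cabs z / eps) ^+ i * (cabs w / eps) ^+ j <= G) ->
  cabs (q z w) <= G * M.
Proof.
move=> e0 HM Hcv G0 HG.
set S := fun N => \sum_(i < N) \sum_(j < N) b i j * z ^+ i * w ^+ j.
have HS : forall N, cabs (S N) <= G * M.
  move=> N; rewrite /S.
  apply: le_trans (cabs_sum _) _.
  apply: le_trans (_ : \sum_(i < N) \sum_(j < N) G * (cabs (b i j) * eps ^+ (i + j)) <= _).
    apply: ler_sum => i _; apply: le_trans (cabs_sum _) _.
    apply: ler_sum => j _; rewrite !cabsM !cabsX.
    have [->|bij] := eqVneq (b i j) 0.
      by rewrite cabs0 !mul0r mulr0.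
    have H := HG _ _ bij.
    have E : cabs (b i j) * cabs z ^+ i * cabs w ^+ j =
       (cabs (b i j) * eps ^+ (i + j)) * ((cabs z / eps) ^+ i * (cabs w / eps) ^+ j).
      rewrite !exprMn exprD !exprVn; field; rewrite ?expf_neq0 // gt_eqF //.
    rewrite E mulrC; apply: ler_wpM2r => //.
    by apply: mulr_ge0; [apply: cabs_ge0 | apply: exprn_ge0; apply: ltW].
  have -> : \sum_(i < N) \sum_(j < N) G * (cabs (b i j) * eps ^+ (i + j)) =
    G * \sum_(i < N) \sum_(j < N) cabs (b i j) * eps ^+ (i + j).
    by rewrite mulr_sumr; apply: eq_bigr => i _; rewrite mulr_sumr.
  by apply: ler_wpM2l.
apply/ler_addgt0Pr => e ep.
have [N HN] := cvgC Hcv ep.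
have h1 := HN N (leqnn N).
have E : q z w = (q z w - S N) + S N by rewrite subrK.
rewrite E; apply: le_trans (cabsD _ _) _.
by rewrite addrC; apply: lerD => //; apply: ltW.
Qed.

Lemma Pbounds (p : C -> C) (a : C) (delta : nat) : a != 0 ->
  (fun z => p z - a * z ^+ delta) =O_ (nbhs (0 : C)) (fun z => z ^+ delta.+1) ->
  exists2 rho : R, 0 < rho & forall z, cabs z < rho ->
    cabs a / 2 * cabs z ^+ delta <= cabs (p z) /\ cabs (p z) <= 2 * cabs a * cabs z ^+ delta.
Proof.
move=> a0 /eqO_exP [k k0 Hk].
have [e /= e0 He] := nbhs_norm0P.1 Hk.
have [kr0 kE] := posC k0.
have [er0 eE] := posC e0.
set kr := complex.Re k in kr0 kE; set er := complex.Re e in er0 eE.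
have A0 : 0 < cabs a := cabs_gt0 a0.
exists (Num.min er (cabs a / (2 * kr))).
  by rewrite lt_min er0 divr_gt0 // mulr_gt0.
move=> z; rewrite lt_min => /andP [zer zk].
have Hz := He z.
rewrite /= eE ltC in Hz; have {Hz} := Hz zer.
rewrite kE !normE -rmorphM lecR cabsX => Hb.
have zge := cabs_ge0 z.
have h1 : kr * cabs z ^+ delta.+1 <= cabs a / 2 * cabs z ^+ delta.
  rewrite exprS mulrA; apply: ler_wpM2r; first by apply: exprn_ge0.
  move: zk; rewrite ltr_pdivlMr ?mulr_gt0 // => zk.
  have : kr * cabs z <= cabs a / 2.
    rewrite ler_pdivlMr //; lra.
  by [].
have Hb' := le_trans Hb h1.
have E1 : p z = (p z - a * z ^+ delta) + a * z ^+ delta by rewrite subrK.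
have E2 : a * z ^+ delta = p z - (p z - a * z ^+ delta) by rewrite opprB addrC subrK.
have t1 := cabsD (p z - a * z ^+ delta) (a * z ^+ delta).
have t2 := cabsB (p z) (p z - a * z ^+ delta).
rewrite -E1 in t1; rewrite -E2 in t2.
rewrite cabsM cabsX in t1 t2.
have zd := exprn_ge0 delta zge.
split; nra.
Qed.

End QB.

Close Scope complex_scope.

Set Implicit Arguments.
Unset Strict Implicit.

Section G.
Variable R : realType.

Lemma bernoulli (rho : R) j : 1 <= rho -> 1 + j%:R * (rho - 1) <= rho ^+ j.
Proof.
move=> r1; elim: j => [|j IH]; first by rewrite expr0 mul0r addr0.
rewrite exprS.
have h : rho * (1 + j%:R * (rho - 1)) <= rho * rho ^+ j.
  by apply: ler_wpM2l => //; lra.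
apply: le_trans h.
rewrite -natr1.
have j0 : 0 <= j%:R :> R by [].
have : 0 <= j%:R * (rho - 1) * (rho - 1) by apply: mulr_ge0; [apply: mulr_ge0|]; lra.
lra.
Qed.

Lemma archi_nat (x : R) : exists N : nat, x < N%:R.
Proof.
case: (leP 0 x) => x0; last by exists 0%N.
by exists (Num.Def.archi_bound x); apply: archi_boundP.
Qed.

Lemma geo_small (K e : R) : 0 < e -> exists J : nat, forall j, (J <= j)%N -> K * (1/2) ^+ j < e.
Proof.
move=> e0.
have [J HJ] := archi_nat (K / e).
exists J => j Jj.
have h2 : 1 + j%:R * (2 - 1) <= (2 : R) ^+ j by apply: bernoulli; lra.
have Jj' : J%:R <= j%:R :> R by rewrite ler_nat.
have p2 : 0 < (2 : R) ^+ j by apply: exprn_gt0.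
have E : K * (1 / 2) ^+ j = K / 2 ^+ j by rewrite expr_div_n expr1n mulrA mulr1.
rewrite E ltr_pdivrMr //.
have HJ' : K < J%:R * e by rewrite -ltr_pdivrMr.
have h3 : e * (1 + j%:R * (2 - 1)) <= e * 2 ^+ j by apply: ler_wpM2l => //; lra.
have h4 : e * J%:R <= e * j%:R by apply: ler_wpM2l => //; lra.
lra.
Qed.

Lemma growth (u v : nat -> R) (A B L K : R) (N : nat) :
  0 < B -> B < A -> 0 < L ->
  (forall k, (N <= k)%N -> 0 < v k /\ v k <= L * u k /\
      A * v k - K <= v k.+1 /\ u k.+1 <= B * u k + K) ->
  (forall T, exists N', forall k, (N' <= k)%N -> T <= v k) -> False.
Proof.
move=> B0 BA L0 H Hinf.
set A1 := (2 * A + B) / 3; set B1 := (A + 2 * B) / 3.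
set K' := Num.max K 0.
have K'0 : 0 <= K' by rewrite le_max lexx orbT.
have KK : K <= K' by rewrite le_max lexx.
set T0 := K' / (A - A1) + L * K' / (B1 - B) + 1.
have AA1 : 0 < A - A1 by rewrite /A1; lra.
have BB1 : 0 < B1 - B by rewrite /B1; lra.
have [N1 HN1] := Hinf T0.
set n0 := maxn N N1.
have step : forall k, (n0 <= k)%N -> A1 * v k <= v k.+1 /\ 0 < u k /\ u k.+1 <= B1 * u k.
  move=> k k0.
  have kN : (N <= k)%N by apply: leq_trans k0; apply: leq_maxl.
  have kN1 : (N1 <= k)%N by apply: leq_trans k0; apply: leq_maxr.
  have [v0 [vu [hv hu]]] := H k kN.
  have vT := HN1 k kN1.
  have t1 : K' / (A - A1) <= v k.
    apply: le_trans vT; rewrite /T0.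
    have : 0 <= L * K' / (B1 - B) by apply: divr_ge0; [apply: mulr_ge0; lra | lra].
    lra.
  have t1' : K' <= (A - A1) * v k by rewrite [X in _ <= X]mulrC -ler_pdivrMr.
  have t2 : L * K' / (B1 - B) <= v k.
    apply: le_trans vT; rewrite /T0.
    have : 0 <= K' / (A - A1) by apply: divr_ge0 => //; lra.
    lra.
  have t2' : L * K' <= (B1 - B) * v k by rewrite [X in _ <= X]mulrC -ler_pdivrMr.
  have u0 : 0 < u k.
    have : 0 < L * u k by lra.
    by rewrite pmulr_rgt0.
  split; first by lra.
  split => //.
  have : L * K' <= L * ((B1 - B) * u k).
    apply: le_trans t2' _.
    have : (B1 - B) * v k <= (B1 - B) * (L * u k) by apply: ler_wpM2l => //; lra.
    by rewrite mulrCA.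
  rewrite ler_pM2l // => h; lra.
have [v0 _] := H n0 (leq_maxl _ _).
have [_ [u0 _]] := step n0 (leqnn _).
set rho := A1 / B1.
have B10 : 0 < B1 by rewrite /B1; lra.
have rho1 : 1 < rho by rewrite /rho ltr_pdivlMr // mul1r /A1 /B1; lra.
have ratio : forall j, rho ^+ j * (v n0 / u n0) <= v (n0 + j)%N / u (n0 + j)%N.
  elim => [|j IH]; first by rewrite expr0 mul1r addn0.
  have kk : (n0 <= n0 + j)%N by apply: leq_addr.
  have [s1 [s2 s3]] := step _ kk.
  have [vj _] := H (n0 + j)%N (leq_trans (leq_maxl _ _) kk).
  have [vj1 [vuj1 _]] := H (n0 + j).+1 (leq_trans (leq_maxl _ _) (leq_trans kk (leqnSn _))).
  have uj1 : 0 < u (n0 + j).+1.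
    have : 0 < L * u (n0 + j).+1 by lra.
    by rewrite pmulr_rgt0.
  rewrite addnS exprS -mulrA.
  have h1 : rho * (rho ^+ j * (v n0 / u n0)) <= rho * (v (n0 + j)%N / u (n0 + j)%N).
    by apply: ler_wpM2l => //; lra.
  apply: le_trans h1 _.
  have E : rho * (v (n0 + j)%N / u (n0 + j)%N) = (A1 * v (n0 + j)%N) / (B1 * u (n0 + j)%N).
    by rewrite /rho; field; apply/andP; split; rewrite gt_eqF.
  rewrite E ler_pdivrMr; last by apply: mulr_gt0.
  have h2 : v (n0 + j).+1 / u (n0 + j).+1 * (B1 * u (n0 + j)%N) >=
            v (n0 + j).+1 / u (n0 + j).+1 * u (n0 + j).+1.
    by apply: ler_wpM2l => //; apply: divr_ge0; lra.
  rewrite divfK ?gt_eqF // in h2.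
  lra.
have rle : forall j, v (n0 + j)%N / u (n0 + j)%N <= L.
  move=> j; have kk : (n0 <= n0 + j)%N by apply: leq_addr.
  have [_ [uj _]] := step _ kk.
  have [_ [vuj _]] := H (n0 + j)%N (leq_trans (leq_maxl _ _) kk).
  by rewrite ler_pdivrMr // mulrC.
set r0 := v n0 / u n0.
have r00 : 0 < r0 by apply: divr_gt0.
have [jj Hj] := archi_nat (L / (r0 * (rho - 1))).
have h := le_trans (ratio jj) (rle jj).
have hb := bernoulli jj (ltW rho1).
have h' : (1 + jj%:R * (rho - 1)) * r0 <= L.
  by apply: le_trans h; apply: ler_wpM2r => //; apply: ltW.
have : L < jj%:R * (r0 * (rho - 1)) by rewrite -ltr_pdivrMr // mulr_gt0 //; lra.
have : 0 <= r0 by apply: ltW.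
nra.
Qed.

End G.

Set Implicit Arguments.
Unset Strict Implicit.

Section H.
Variable R : realType.
Local Notation C := (cpx R).

Lemma xn_le (x : R) m n : 0 <= x -> x <= 1 -> (m <= n)%N -> x ^+ n <= x ^+ m.
Proof.
move=> x0 x1 mn; rewrite -(subnKC mn) exprD.
apply: ler_piMr; first exact: exprn_ge0.
exact: exprn_ile1.
Qed.

Lemma iter_fst (p : C -> C) (q : C -> C -> C) j (u : C * C) :
  (iter j (skew_map p q) u).1 = iter j p u.1.
Proof. by elim: j => [|j IH] //=; rewrite IH. Qed.

Lemma powR_le1' (a l : R) : 0 <= a -> a <= 1 -> 0 <= l -> a `^ l <= 1.
Proof.
move=> a0 a1 l0; rewrite /powR; case: (a == 0).
  by case: (l == 0) => /=; rewrite ?ler01 ?lexx.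
rewrite expR_le1; apply: mulr_ge0_le0 => //; exact: ln_le0.
Qed.

Lemma small_list (l : seq R) : all (fun x => 0 < x) l ->
  exists2 s, 0 < s & all (fun x => s <= x) l.
Proof.
elim: l => [|x l IH] /=; first by exists 1.
move=> /andP [x0 /IH [s s0 H]].
exists (Num.min x s); first by rewrite lt_min x0 s0.
rewrite ge_min lexx /=; apply/allP => y yl.
by rewrite ge_min (allP H y yl) orbT.
Qed.

End H.

Lemma trap_lemma (R : realType) (p : cpx R -> cpx R) (q : cpx R -> cpx R -> cpx R)
  (A rho eps M tau sig : R) (delta : nat) :
  (forall z, cabs z < rho ->
    A / 2 * cabs z ^+ delta <= cabs (p z) /\ cabs (p z) <= 2 * A * cabs z ^+ delta) ->
  (forall z w, cabs z < eps -> cabs w < eps ->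
    cabs (q z w) <= (cabs z / eps + (cabs w / eps) ^+ 2) * M) ->
  0 < A -> 0 < eps -> 0 <= M -> 0 < tau -> 0 < sig -> (2 <= delta)%N ->
  tau <= eps / 2 -> tau <= eps ^+ 2 / (4 * (M + 1)) ->
  sig <= eps / 2 -> sig <= rho / 2 -> sig <= 1 / 2 ->
  sig <= 1 / (8 * (A + 1)) -> sig <= tau * eps / (4 * (M + 1)) ->
  forall y : cpx R * cpx R, cabs y.1 < sig -> cabs y.2 <= tau -> forall j,
   [/\ cabs (iter j (skew_map p q) y).1 <= cabs y.1 * (((1 : R) / 2) ^+ j) ^+ 2,
   cabs (iter j (skew_map p q) y).2 <= tau * ((1 : R) / 2) ^+ j &
   (y.1 != 0 -> (iter j (skew_map p q) y).1 != 0)].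
Proof.
move=> Hpb qsup A0 eps0 M0 tau0 sig0 d2 tau1 tau2 sig1 sig2 sig3 sig4 sig5.
set f := skew_map p q.
  move=> y hy1 hy2; elim => [|j [IH1 IH2 IH3]].
    by rewrite /= expr0 expr1n !mulr1 lexx.
  rewrite iterS.
  set u := iter j f y in IH1 IH2 IH3 *.
  have -> : f u = (p u.1, q u.1 u.2) by [].
  rewrite /=.
  set z := u.1 in IH1 IH3 *; set w := u.2 in IH2 *.
  set g := ((1 : R) / 2) ^+ j in IH1 IH2 *.
  have g0 : 0 < g by apply: exprn_gt0; lra.
  have g1 : g <= 1 by apply: exprn_ile1; lra.
  have gS : ((1 : R) / 2) ^+ j.+1 = g / 2 by rewrite exprSr /g mulrA mulr1.
  rewrite gS.
  have cz0 := cabs_ge0 z; have y10 := cabs_ge0 y.1; have cw0 := cabs_ge0 w.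
  have g2 : g ^+ 2 <= g by rewrite expr2; apply: ler_piMr; lra.
  have hZ : cabs z <= sig * g.
    apply: le_trans IH1 _.
    have : cabs y.1 * g ^+ 2 <= cabs y.1 * g by apply: ler_wpM2l.
    have : cabs y.1 * g <= sig * g by apply: ler_wpM2r; lra.
    lra.
  have hzs : cabs z <= sig by apply: le_trans hZ _; apply: ler_piMr; lra.
  have hzr : cabs z < rho by lra.
  have [pl pu] := Hpb z hzr.
  have cz1 : cabs z <= 1 by lra.
  have czd : cabs z ^+ delta <= cabs z ^+ 2 := xn_le cz0 cz1 d2.
  split.
  - have e1 : cabs (p z) <= 2 * A * (cabs z * cabs z).
      apply: le_trans pu _; apply: ler_wpM2l; first by lra.
      by rewrite -expr2.
    have s4 : sig * (8 * (A + 1)) <= 1.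
      by move: sig4; rewrite ler_pdivlMr ?mul1r //; lra.
    have e2 : 2 * A * (cabs z * cabs z) <= cabs z / 4.
      have : cabs z * (sig * (8 * (A + 1))) <= cabs z * 1 by apply: ler_wpM2l.
      have : 0 <= cabs z * cabs z by apply: mulr_ge0.
      have : A * (cabs z * cabs z) <= A * (cabs z * sig).
        by apply: ler_wpM2l; [lra | apply: ler_wpM2l].
      have : 0 <= cabs z * sig by apply: mulr_ge0; lra.
      lra.
    have e3 : cabs z <= cabs y.1 * g ^+ 2 := IH1.
    have -> : cabs y.1 * (g / 2) ^+ 2 = cabs y.1 * g ^+ 2 / 4.
      by rewrite expr_div_n; field.
    lra.
  - have hze : cabs z < eps by lra.
    have hw : cabs w <= tau by apply: le_trans IH2 _; apply: ler_piMr; lra.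
    have hwe : cabs w < eps by lra.
    have Q := qsup z w hze hwe.
    have hs5 : sig * M <= tau * eps / 4.
      move: sig5; rewrite ler_pdivlMr; last by apply: mulr_gt0; lra.
      have : 0 <= sig * 4 by lra.
      nra.
    have ht2 : tau * M <= eps ^+ 2 / 4.
      move: tau2; rewrite ler_pdivlMr; last by apply: mulr_gt0; lra.
      have : 0 <= tau * 4 by lra.
      nra.
    have E : (cabs z / eps + (cabs w / eps) ^+ 2) * M =
             (cabs z * M * eps + cabs w ^+ 2 * M) / eps ^+ 2.
      by field; rewrite gt_eqF.
    rewrite E in Q; apply: le_trans Q _.
    rewrite ler_pdivrMr; last by apply: exprn_gt0.
    have t1 : cabs z * M <= tau * eps / 4 * g.
      have : cabs z * M <= sig * g * M by apply: ler_wpM2r.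
      have : sig * g * M <= tau * eps / 4 * g.
        by rewrite mulrAC; apply: ler_wpM2r; lra.
      lra.
    have t1' : cabs z * M * eps <= tau * eps / 4 * g * eps.
      by apply: ler_wpM2r; lra.
    have t2 : cabs w ^+ 2 * M <= (tau * g) ^+ 2 * M.
      apply: ler_wpM2r => //; rewrite !expr2; apply: ler_pM => //.
    have t3 : (tau * g) ^+ 2 * M <= tau * g ^+ 2 * (eps ^+ 2 / 4).
      have -> : (tau * g) ^+ 2 * M = tau * g ^+ 2 * (tau * M) by ring.
      apply: ler_wpM2l; last by [].
      by apply: mulr_ge0; [lra | apply: exprn_ge0; lra].
    have t4 : tau * g ^+ 2 * (eps ^+ 2 / 4) <= tau * g * (eps ^+ 2 / 4).
      apply: ler_wpM2r; first by apply: divr_ge0; [apply: exprn_ge0; lra | lra].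
      by apply: ler_wpM2l; lra.
    have -> : tau * (g / 2) * eps ^+ 2 = tau * eps / 4 * g * eps + tau * g * (eps ^+ 2 / 4).
      by rewrite expr2; field.
    lra.
  - move=> y0; have z0 := IH3 y0.
    apply/eqP => pz0.
    have zp := cabs_gt0 z0.
    have : 0 < A / 2 * cabs z ^+ delta.
      by apply: mulr_gt0; [lra | apply: exprn_gt0].
    by move: pl; rewrite pz0 cabs0; lra.
Qed.

Set Implicit Arguments.
Unset Strict Implicit.

Lemma ln_lt (R : realType) (x y : R) : 0 < x -> x < y -> ln x < ln y.
Proof.
move=> x0 xy; have y0 : 0 < y by apply: lt_trans xy.
by rewrite ltr_ln ?posrE.
Qed.

Lemma ln_le (R : realType) (x y : R) : 0 < x -> x <= y -> ln x <= ln y.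
Proof.
move=> x0 xy; have y0 : 0 < y by apply: lt_le_trans xy.
by rewrite ler_ln ?posrE.
Qed.

Lemma lnM' (R : realType) (x y : R) : 0 < x -> 0 < y -> ln (x * y) = ln x + ln y.
Proof. by move=> x0 y0; rewrite lnM ?posrE. Qed.

Lemma lnK' (R : realType) (x : R) : 0 < x -> expR (ln x) = x.
Proof. by move=> x0; rewrite lnK ?posrE. Qed.

Lemma sup_dir (R : realType) (p : cpx R -> cpx R) (q : cpx R -> cpx R -> cpx R)
  (b : nat -> nat -> cpx R) (A rho eps M l l' mu r : R) (delta : nat) (x : cpx R * cpx R) :
  (forall z, cabs z < rho -> A / 2 * cabs z ^+ delta <= cabs (p z)) ->
  (forall z w, cabs z < eps -> cabs w < eps -> forall G, 0 <= G ->
     (forall i j, b i j != 0 -> (cabs z / eps) ^+ i * (cabs w / eps) ^+ j <= G) ->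
     cabs (q z w) <= G * M) ->
  (forall i j, b i j != 0 -> mu <= i%:R + l' * j%:R) ->
  0 < A -> 0 < rho -> 0 < eps -> 0 <= M -> 0 < l -> l < l' -> l' * delta%:R < mu -> 0 < r ->
  (0 < delta)%N ->
  (forall k, (iter k (skew_map p q) x).1 != 0) ->
  (forall e, 0 < e -> exists N, forall k, (N <= k)%N ->
      cabs (iter k (skew_map p q) x).1 < e /\ cabs (iter k (skew_map p q) x).2 < e) ->
  (forall k, ~ Ulplus r l (iter k (skew_map p q) x)) ->
  False.
Proof.
move=> Hpb Hq Hmu A0 rho0 eps0 M0 l0 ll' l'mu r0 d0 Hnz Hcv Hno.
set f := skew_map p q.
set z := fun k => (iter k f x).1.
set w := fun k => (iter k f x).2.
have zS : forall k, z k.+1 = p (z k) by move=> k; rewrite /z iterS.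
have wS : forall k, w k.+1 = q (z k) (w k) by move=> k; rewrite /w iterS.
have l'0 : 0 < l' by lra.
set B0 := (1 - l') * ln eps - ln r.
set th := expR (- B0 / (l' - l)).
have th0 : 0 < th by apply: expR_gt0.
have [c1 c10] : exists2 c : R, 0 < c & all (fun y => c <= y) [:: r; rho; eps; th].
  by apply: small_list; rewrite /= r0 rho0 eps0 th0.
rewrite /= andbT => /and4P [c1r c1rho c1eps c1th].
have [K0 HK0] := Hcv _ c10.
set u := fun k => ln eps - ln (cabs (z k)).
set v := fun k => ln eps - ln (cabs (w k)).
have zpos : forall k, 0 < cabs (z k) by move=> k; apply: cabs_gt0; apply: Hnz.
have facts : forall k, (K0 <= k)%N ->
   [/\ cabs (z k) < th, cabs (z k) < rho, cabs (z k) < eps, cabs (w k) < eps &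
       r * cabs (z k) `^ l <= cabs (w k)].
  move=> k kK; have [hz hw] := HK0 k kK.
  split; try lra.
  have := Hno k; rewrite /Ulplus -/(z k) -/(w k) => H.
  rewrite leNgt; apply/negP => H'; apply: H; split => //; lra.
have wpos : forall k, (K0 <= k)%N -> 0 < cabs (w k).
  move=> k kK; have [_ _ _ _ h] := facts k kK.
  apply: lt_le_trans h; apply: mulr_gt0 => //; apply: powR_gt0; exact: zpos.
have vpos : forall k, (K0 <= k)%N -> 0 < v k.
  move=> k kK; have [_ _ _ h _] := facts k kK.
  have := ln_lt (wpos k kK) h; rewrite /v; lra.
have vu : forall k, (K0 <= k)%N -> v k <= l' * u k.
  move=> k kK; have [hth _ _ _ h] := facts k kK.
  have hpos : 0 < r * cabs (z k) `^ l by apply: mulr_gt0 => //; apply: powR_gt0.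
  have h1 := ln_le hpos h.
  rewrite (lnM' r0 (powR_gt0 l (zpos k))) ln_powR in h1.
  have h2 := ln_lt (zpos k) hth.
  rewrite /th expRK in h2.
  have h3 : (l' - l) * ln (cabs (z k)) <= - B0.
    have : (l' - l) * ln (cabs (z k)) <= (l' - l) * (- B0 / (l' - l)).
      by apply: ler_wpM2l; lra.
    have -> : (l' - l) * (- B0 / (l' - l)) = - B0 by field; lra.
    by [].
  rewrite /v /u /B0 in h3 *.
  lra.
have Zexp : forall k, cabs (z k) / eps = expR (- u k).
  move=> k; rewrite /u opprB expRD expRN (lnK' (zpos k)) (lnK' eps0) //.
have Wexp : forall k, (K0 <= k)%N -> cabs (w k) / eps = expR (- v k).
  move=> k kK; rewrite /v opprB expRD expRN (lnK' (wpos k kK)) (lnK' eps0) //.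
set K1 := ln (M + 1) - ln eps.
set K2 := (1 - delta%:R) * ln eps - ln (A / 2).
set Kc := Num.max K1 K2.
have K1c : K1 <= Kc by rewrite le_max lexx.
have K2c : K2 <= Kc by rewrite le_max lexx orbT.
have recv : forall k, (K0 <= k)%N -> mu / l' * v k - Kc <= v k.+1.
  move=> k kK.
  have [_ _ hze hwe _] := facts k kK.
  have kK1 : (K0 <= k.+1)%N by apply: leq_trans kK _.
  set G := expR (- (mu / l') * v k).
  have G0 : 0 <= G by apply: ltW; apply: expR_gt0.
  have HG : forall i j, b i j != 0 -> (cabs (z k) / eps) ^+ i * (cabs (w k) / eps) ^+ j <= G.
    move=> i j bij.
    rewrite Zexp (Wexp k kK) -!expRM_natl -expRD /G ler_expR.
    have hm := Hmu i j bij.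
    have v0 := ltW (vpos k kK).
    have hv := vu k kK.
    have i0 : 0 <= i%:R :> R by [].
    have j0 : 0 <= j%:R :> R by [].
    have e1 : mu / l' * v k <= (i%:R + l' * j%:R) / l' * v k.
      by apply: ler_wpM2r => //; apply: ler_wpM2r => //; rewrite invr_ge0 ltW.
    have e2 : (i%:R + l' * j%:R) / l' * v k = i%:R * (v k / l') + j%:R * v k.
      by field; lra.
    have e3 : i%:R * (v k / l') <= i%:R * u k.
      apply: ler_wpM2l => //; rewrite ler_pdivrMr // mulrC //.
    lra.
  have Hw := Hq _ _ hze hwe G G0 HG.
  rewrite -wS in Hw.
  have Hw' : cabs (w k.+1) <= G * (M + 1).
    apply: le_trans Hw _; apply: ler_wpM2l => //; lra.
  have := ln_le (wpos _ kK1) Hw'.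
  have Gp : 0 < G by apply: expR_gt0.
  have M1 : 0 < M + 1 by lra.
  rewrite (lnM' Gp M1) /G expRK.
  rewrite /v /K1 in K1c *; lra.
have recu : forall k, (K0 <= k)%N -> u k.+1 <= delta%:R * u k + Kc.
  move=> k kK.
  have [_ hzr _ _ _] := facts k kK.
  have h := Hpb _ hzr.
  rewrite -zS in h.
  have hpos : 0 < A / 2 * cabs (z k) ^+ delta.
    by apply: mulr_gt0; [lra | apply: exprn_gt0; apply: zpos].
  have := ln_le hpos h.
  rewrite lnM' ?exprn_gt0 ?zpos //; last by lra.
  rewrite lnXn ?zpos // -[ln (cabs (z k)) *+ delta]mulr_natr.
  rewrite /u /K2 in K2c *; lra.
have Hinf : forall T, exists N', forall k, (N' <= k)%N -> T <= v k.
  move=> T.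
  have e0 : 0 < eps * expR (- T) by apply: mulr_gt0 => //; apply: expR_gt0.
  have [N1 HN1] := Hcv _ e0.
  exists (maxn K0 N1) => k kN.
  have kK : (K0 <= k)%N by apply: leq_trans kN; apply: leq_maxl.
  have kN1 : (N1 <= k)%N by apply: leq_trans kN; apply: leq_maxr.
  have [_ hw] := HN1 k kN1.
  have := ln_lt (wpos k kK) hw.
  rewrite lnM' ?expR_gt0 // expRK /v; lra.
apply: (@growth R u v (mu / l') delta%:R l' Kc K0).
- by rewrite ltr0n.
- by rewrite ltr_pdivlMr // mulrC.
- exact: l'0.
- move=> k kK; split; first exact: vpos.
  split; first exact: vu.
  split; first exact: recv.
  exact: recu.
- exact: Hinf.
Qed.

Unset Implicit Arguments.
Set Strict Implicit.

Theorem theorem2p14 (R : realType) (Rad : option R)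
    (p : cpx R -> cpx R) (q : cpx R -> cpx R -> cpx R)
    (a : cpx R) (delta : nat) (b : nat -> nat -> cpx R)
    (s : nat) (n m : nat -> nat) (k : nat) :
  (* domain: C^2 (Rad = None) or {|z| < Rad} x C with the basin of p at 0
     relatively compact in {|z| < Rad} *)
  (forall R0, Rad = Some R0 ->
     0 < R0 /\ rel_compact_in (basin1 (disk Rad) p) (disk Rad)) ->
  holo1 (disk Rad) p ->
  holo2 (dom2 Rad) q ->
  (* p(z) = a z^delta + O(z^(delta+1)), a <> 0, delta >= 2 *)
  a != 0 -> (2 <= delta)%N ->
  (fun z => p z - a * z ^+ delta) =O_ (nbhs (0 : cpx R))
    (fun z => z ^+ delta.+1) ->
  (* q(z,w) = sum b_ij z^i w^j with b_00 = b_01 = 0 *)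
  expansion2 q b -> b 0%N 0%N = 0 -> b 0%N 1%N = 0 ->
  (* vertices of the Newton polygon *)
  newton_vertices b s n m ->
  (* Case 4, with (gamma, d) = (n_k, m_k) *)
  (2 < s)%N -> (2 <= k)%N -> (k <= s.-1)%N ->
  T_intercept R n m k <= delta%:R <= T_intercept R n m k.-1 ->
  (n 1%N, m 1%N) != (0%N, delta) ->
  let alpha : R := (n k)%:R / (delta%:R - (m k)%:R) in
  exists2 r0 : R, 0 < r0 &
    forall r l : R, 0 < r < r0 -> 0 < l < alpha ->
      Alplus Rad (skew_map p q) r l =
        basin0 Rad (skew_map p q) `\` Ez Rad (skew_map p q).
Proof.
move=> HR Hp Hq a0 d2 HO Hexp b00 b01 NV s2 k2 ks HT Hv1 alpha.
have [[gpos ddpos alpos alE] _] := c4_basic NV s2 k2 ks HT Hv1.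
have [rho rho0 Hpb] := Pbounds a0 HO.
case: Hexp => eps eps0 [[M HM] Hcv].
have M0 : 0 <= M by have := HM 0%N; rewrite big_ord0.
set A := cabs a.
have A0 : 0 < A := cabs_gt0 a0.
set Rb : R := match Rad with Some R0 => R0 | None => 1 end.
have Rb0 : 0 < Rb.
  by rewrite /Rb; case E: Rad => [R0|//]; have [] := HR R0 E.
have diskP : forall u, cabs u < Rb -> disk Rad u.
  by rewrite /Rb; case: (Rad) => [R0|] u //=.
have p0 : p 0 = 0.
  have h0 : cabs (0 : cpx R) < rho by rewrite cabs0.
  have [_ h] := Hpb 0 h0.
  have dn0 : (delta == 0%N) = false by apply/negbTE; rewrite -lt0n; apply: leq_trans d2.
  rewrite cabs0 expr0n /= dn0 mulr0 in h.
  by apply: cabs_eq0; apply: le_anti; rewrite h cabs_ge0.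
have qsup : forall z w, cabs z < eps -> cabs w < eps ->
   cabs (q z w) <= (cabs z / eps + (cabs w / eps) ^+ 2) * M.
  move=> z w hz hw.
  have Z0 : 0 <= cabs z / eps by apply: divr_ge0 (cabs_ge0 _) (ltW eps0).
  have Z1 : cabs z / eps <= 1 by rewrite ler_pdivrMr // mul1r ltW.
  have W0 : 0 <= cabs w / eps by apply: divr_ge0 (cabs_ge0 _) (ltW eps0).
  have W1 : cabs w / eps <= 1 by rewrite ler_pdivrMr // mul1r ltW.
  apply: Qbound eps0 HM (Hcv z w hz hw) _ _.
    by apply: addr_ge0 => //; apply: exprn_ge0.
  move=> i j bij.
  have hZi := exprn_ge0 i Z0; have hWj := exprn_ge0 j W0.
  have hW2 := exprn_ge0 2 W0.
  case: (leqP 2 j) => j2.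
    have h1 := exprn_ile1 i Z0 Z1.
    have h2 := xn_le W0 W1 j2.
    have : (cabs z / eps) ^+ i * (cabs w / eps) ^+ j <= 1 * (cabs w / eps) ^+ j.
      by apply: ler_wpM2r.
    lra.
  have i1 : (1 <= i)%N.
    case: i bij {hZi} => [|i] //; case: j j2 {hWj} => [|[|j]] //; by rewrite ?b00 ?b01 eqxx.
  have h1 := xn_le Z0 Z1 i1; rewrite expr1 in h1.
  have h2 := exprn_ile1 j W0 W1.
  have : (cabs z / eps) ^+ i * (cabs w / eps) ^+ j <= (cabs z / eps) ^+ i * 1.
    by apply: ler_wpM2l.
  lra.
set f := skew_map p q.
have [tau tau0] : exists2 t : R, 0 < t & all (fun x => t <= x)
    [:: eps / 2; eps ^+ 2 / (4 * (M + 1))].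
  by apply: small_list; rewrite /= !divr_gt0 ?exprn_gt0 ?mulr_gt0 //; lra.
rewrite /= andbT => /andP [tau1 tau2].
have [sig sig0] : exists2 t : R, 0 < t & all (fun x => t <= x)
    [:: eps / 2; rho / 2; 1 / 2; 1 / (8 * (A + 1)); tau * eps / (4 * (M + 1)); Rb / 2].
  by apply: small_list; rewrite /= !divr_gt0 ?mulr_gt0 //; lra.
rewrite /= andbT => /and5P [sig1 sig2 sig3 sig4 /andP [sig5 sig6]].
have trap := trap_lemma Hpb qsup A0 eps0 M0 tau0 sig0 d2 tau1 tau2 sig1 sig2 sig3 sig4 sig5.
have iterfst : forall j (u : cpx R * cpx R), u.1 = 0 -> (iter j f u).1 = 0.
  move=> j u u0; rewrite /f iter_fst u0.
  by elim: j => [|j IH] //=; rewrite IH p0.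
have gle : forall j, 0 <= ((1 : R) / 2) ^+ j <= 1.
  by move=> j; rewrite exprn_ge0 ?exprn_ile1 //; lra.
exists (Num.min sig tau); first by rewrite lt_min sig0 tau0.
move=> r l /andP [r0 rr0] /andP [l0 lal].
rewrite lt_min in rr0; case/andP: rr0 => rsig rtau.
apply/seteqP; split => x.
- case=> n0 _ [Hd [HU1 HU2]].
  set y := iter n0 f x in HU1 HU2.
  have cy1 := cabs_ge0 y.1; have cy2 := cabs_ge0 y.2.
  have y1nz : y.1 != 0.
    apply/eqP => E; move: HU2; rewrite E cabs0 powR0; last by rewrite gt_eqF.
    by rewrite mulr0; lra.
  have hy1 : cabs y.1 < sig by lra.
  have hy2 : cabs y.2 <= tau.
    have cy11 : cabs y.1 <= 1 by lra.
    have h := powR_le1' cy1 cy11 (ltW l0).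
    have : r * cabs y.1 `^ l <= r * 1 by apply: ler_wpM2l; [lra | apply: h].
    lra.
  have T := trap y hy1 hy2.
  have iterD' : forall j, iter (j + n0) f x = iter j f y by move=> j; rewrite iterD.
  have Tz : forall j, cabs (iter j f y).1 <= sig * ((1 : R) / 2) ^+ j.
    move=> j; have [T1 _ _] := T j; apply: le_trans T1 _.
    have /andP [g0 g1] := gle j.
    have : ((1 : R) / 2) ^+ j ^+ 2 <= ((1 : R) / 2) ^+ j by rewrite expr2; apply: ler_piMr.
    have : 0 <= ((1 : R) / 2) ^+ j ^+ 2 by apply: exprn_ge0.
    nra.
  split.
  + split.
    * move=> kk; case: (leqP kk n0) => hk; first by apply: (Hd kk hk).
      rewrite -(subnK (ltnW hk)) iterD' /dom2 /=; apply: diskP.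
      have := Tz (kk - n0)%N; have /andP [g0 g1] := gle (kk - n0)%N.
      have : sig * ((1 : R) / 2) ^+ (kk - n0)%N <= sig by apply: ler_piMr => //; lra.
      lra.
    * apply: cvg_pair_seq => /=.
      -- apply: cvgC0 => e e0.
         have [J HJ] := geo_small sig e0.
         exists (J + n0)%N => kk hk.
         have hk' : (n0 <= kk)%N by apply: leq_trans hk; apply: leq_addl.
         rewrite -(subnK hk') iterD'.
         apply: le_lt_trans (Tz _) _; apply: HJ.
         by rewrite leq_subRL // addnC.
      -- apply: cvgC0 => e e0.
         have [J HJ] := geo_small tau e0.
         exists (J + n0)%N => kk hk.
         have hk' : (n0 <= kk)%N by apply: leq_trans hk; apply: leq_addl.
         rewrite -(subnK hk') iterD'.
         have [_ T2 _] := T (kk - n0)%N.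
         apply: le_lt_trans T2 _; apply: HJ.
         by rewrite leq_subRL // addnC.
  + case=> N _ [HdN HzN].
    case: (leqP n0 N) => hN.
      move: HzN; rewrite -(subnK hN) iterD' => HzN.
      have [_ _ T3] := T (N - n0)%N.
      by move: (T3 y1nz); rewrite HzN eqxx.
    have Ey : y = iter (n0 - N)%N f (iter N f x) by rewrite /y -iterD subnK // ltnW.
    move: y1nz; rewrite Ey iterfst //; by rewrite eqxx.
- case=> [[Hd Hcv0] HnE].
  case: (pselect (exists n0, Ulplus r l (iter n0 f x))) => [[n0 Hn0]|Hno].
    by exists n0 => //; split => // kk _; apply: Hd.
  exfalso.
  set l' := (l + alpha) / 2.
  have l'a : 0 < l' < alpha by rewrite /l'; apply/andP; split; lra.
  have [mu lmu Hmu] := c4_margin NV s2 k2 ks HT Hv1 l'a.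
  apply: (@sup_dir R p q b A rho eps M l l' mu r delta x).
  + by move=> z hz; have [h _] := Hpb z hz.
  + move=> z w hz hw G G0 HG.
    exact: Qbound eps0 HM (Hcv z w hz hw) G0 HG.
  + exact: Hmu.
  + exact: A0.
  + exact: rho0.
  + exact: eps0.
  + exact: M0.
  + exact: l0.
  + by rewrite /l'; lra.
  + exact: lmu.
  + exact: r0.
  + by apply: leq_trans d2.
  + move=> kk; apply/eqP => E; apply: HnE; exists kk => //; split => // j _; apply: Hd.
  + move=> e e0.
    have [N1 H1] := cvgC (cvg_fst_seq Hcv0) e0.
    have [N2 H2] := cvgC (cvg_snd_seq Hcv0) e0.
    exists (maxn N1 N2) => kk hk.
    have := H1 kk (leq_trans (leq_maxl _ _) hk); have := H2 kk (leq_trans (leq_maxr _ _) hk).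
    by rewrite /= !sub0r !cabsN => h2 h1; split.
  + by move=> kk Hk; apply: Hno; exists kk.
Qed.
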